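(* Let $q=2^k$ with $k\ge1$, and let $f(X)\in\mathbb{F}_q[X]$ be non-separable (i.e. $f'(X)=0$) of degree $n\ge 6$. Let $\Delta$ be the set of all $a\in\mathbb{F}_q$ for which $g_a(X):=(f(X+a)+f(a))/X$ equals $v(X)\circ D_s(X,b)$ for some $v(X)\in\mathbb{F}_q[X]$, some integer $s\ge 5$, and some $b\in\mathbb{F}_q^*$. If $|\Delta|>3$, then $f(X)=\rho(X)\circ X^6\circ\eta(X)$ for some degree-one $\rho(X),\eta(X)\in\mathbb{F}_q[X]$.
   Context: For $b\in\mathbb{F}_q$ and positive integer $s$, the Dickson polynomial $D_s(X,b)$ is the unique polynomial with $D_s(X+b/X,b)=X^s+b^s/X^s$; explicitly $D_s(X,b)=\sum_{i=0}^{\lfloor s/2\rfloor}\frac{s}{s-i}\binom{s-i}{i}(-b)^iX^{s-2i}$. *)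

(* Defs.v *)
From HB Require Import structures.
From mathcomp Require Import all_boot all_order all_algebra.
From mathcomp Require Import boolp.
Set Implicit Arguments. Unset Strict Implicit. Unset Printing Implicit Defensive.
Import GRing.Theory.
Local Open Scope ring_scope.

(* The coefficient s/(s-i) * C(s-i,i) is a nonnegative integer, computed as the
   exact natural-number quotient (s * C(s-i,i)) / (s-i). *)
Definition dickson (R : nzRingType) (s : nat) (b : R) : {poly R} :=
  \sum_(i < s./2.+1)
     (((s * 'C(s - i, i)) %/ (s - i))%:R * (- b) ^+ i) *: 'X^(s - 2 * i).

Definition gshift (R : idomainType) (f : {poly R}) (a : R) : {poly R} :=
  (f \Po ('X + a%:P) + (f.[a])%:P) %/ 'X.

Definition in_Delta (F : fieldType) (f : {poly F}) (a : F) : Prop :=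
  exists (v : {poly F}) (s : nat) (b : F),
    (5 <= s)%N /\ b != 0 /\ gshift f a = v \Po dickson s b.

Definition Delta (F : finFieldType) (f : {poly F}) : {set F} :=
  [set a | `[< in_Delta f a >]].

(* Main.v *)
Require Import Defs.
From HB Require Import structures.
From mathcomp Require Import all_boot all_order all_algebra.
Import GRing.Theory.
From mathcomp Require Import all_field.
From mathcomp Require Import zify ring.

Lemma binper8 n k : k <= 3 -> odd 'C(n + 8, k) = odd 'C(n, k).
Proof.
move=> hk; rewrite addnC -(binomial.Vandermonde 8 n k).
case: k hk => [|[|[|[|]]]] // _; rewrite !big_ord_recr big_ord0 /= ?oddD ?oddM /=;
  by case: (odd 'C(n,0)) (odd 'C(n,1)) (odd 'C(n,2)) (odd 'C(n,3)) => [] [] [] [].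
Qed.

Lemma binper n p k : k <= 3 -> odd 'C(n + 8 * p, k) = odd 'C(n, k).
Proof.
move=> hk; elim: p => [|p IH]; first by rewrite muln0 addn0.
by rewrite mulnS addnCA addnC binper8.
Qed.

Lemma split8 t : exists a p, a < 8 /\ t = a + 8 * p.
Proof. exists (t %% 8), (t %/ 8); split; first by rewrite ltn_pmod. by rewrite addnC mulnC -divn_eq. Qed.

Lemma odd8 x p : odd (x + 8 * p) = odd x.
Proof. by rewrite oddD oddM /= addbF. Qed.

Lemma oddE2 N : odd N = (N %% 2 == 1).
Proof. by rewrite modn2; case: (odd N). Qed.

Lemma parity_main t d N : odd t = false -> odd d -> (t+5)*d + 1 = 2*N ->
  odd (d * ('C(t+3,2) + (t+2)) + 'C(d,2)) = odd N /\
  (N %% 4 = 3 -> odd (d * ('C(t+2,3) + 'C(t+1,2)) + 'C(d,3)) = false).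
Proof.
move=> ht hd E.
have [a [p [Ha Ht]]] := split8 t.
have [c [q [Hc Hd]]] := split8 d.
have o1 : odd 'C(t+3,2) = odd 'C(a+3,2) by rewrite Ht addnAC binper.
have o2 : odd 'C(t+2,3) = odd 'C(a+2,3) by rewrite Ht addnAC binper.
have o3 : odd 'C(t+1,2) = odd 'C(a+1,2) by rewrite Ht addnAC binper.
have o4 : odd 'C(d,2) = odd 'C(c,2) by rewrite Hd binper.
have o5 : odd 'C(d,3) = odd 'C(c,3) by rewrite Hd binper.
have o6 : odd (t + 2) = odd a by rewrite Ht addnAC odd8 addn2 /= negbK.
have o7 : odd d = odd c by rewrite Hd odd8.
have ot : odd t = odd a by rewrite Ht odd8.
have HN : 2 * N = 8 * (8 * p * q + p * c + a * q + 5 * q) + ((a + 5) * c + 1).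
  by rewrite -E Ht Hd; ring.
rewrite !oddD !oddM !oddD o1 o2 o3 o4 o5 o7 ot [odd N]oddE2.
rewrite o7 in hd; rewrite ot in ht.
clear o1 o2 o3 o4 o5 o6 o7 ot E Ht Hd.
move: a c Ha Hc ht hd HN => [|[|[|[|[|[|[|[|a]]]]]]]] [|[|[|[|[|[|[|[|c]]]]]]]] Ha Hc ht hd HN; rewrite /= in ht hd Ha Hc; try discriminate; rewrite /=;
  (split; [case: (N %% 2 =P 1) => H //; exfalso; lia | move=> H; first [reflexivity | exfalso; lia]]).
Qed.

Lemma Nfacts N :
  (N %% 4 = 1 -> odd 'C(N,2) = false) /\ (N %% 4 = 3 -> odd 'C(N,2) /\ odd 'C(N,3)).
Proof.
have [a [p [Ha Ht]]] := split8 N.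
have o1 : odd 'C(N,2) = odd 'C(a,2) by rewrite Ht binper.
have o2 : odd 'C(N,3) = odd 'C(a,3) by rewrite Ht binper.
rewrite o1 o2.
move: a Ha Ht {o1 o2} => [|[|[|[|[|[|[|[|a]]]]]]]] Ha Ht //=; split => H //; exfalso; lia.
Qed.

Definition cdk (s i : nat) := (s * 'C(s - i, i)) %/ (s - i).

Lemma cdk0 s : 0 < s -> cdk s 0 = 1.
Proof. by move=> hs; rewrite /cdk subn0 bin0 muln1 divnn hs. Qed.

Lemma cdk1 s : 1 < s -> cdk s 1 = s.
Proof.
move=> hs; rewrite /cdk bin1 mulnC mulKn //; lia.
Qed.

Lemma cdk2 t : cdk (t + 5) 2 = 'C(t + 3, 2) + (t + 2).
Proof.
rewrite /cdk.
have -> : t + 5 - 2 = t + 3 by lia.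
have H := mul_bin_diag (t + 3) 1.
rewrite (_ : (t + 3).-1 = t + 2) in H; last by lia.
move: H; rewrite bin1 => H.
have -> : (t + 5) * 'C(t + 3, 2) = (t + 3) * ('C(t + 3, 2) + (t + 2)).
  by rewrite mulnDr H; ring.
by rewrite mulKn //; lia.
Qed.

Lemma cdk3 t : cdk (t + 5) 3 = 'C(t + 2, 3) + 'C(t + 1, 2).
Proof.
rewrite /cdk.
have -> : t + 5 - 3 = t + 2 by lia.
have H := mul_bin_diag (t + 2) 2.
rewrite (_ : (t + 2).-1 = t + 1) in H; last by lia.
have -> : (t + 5) * 'C(t + 2, 3) = (t + 2) * ('C(t + 2, 3) + 'C(t + 1, 2)).
  by rewrite mulnDr H; ring.
by rewrite mulKn //; lia.
Qed.

Lemma cdk_big s i : s./2 < i -> cdk s i = 0.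
Proof.
move=> hi; rewrite /cdk bin_small ?muln0 ?div0n //.
have H := odd_double_half s; rewrite -muln2 in H.
have : (odd s : nat) <= 1 by case: odd.
lia.
Qed.

Local Open Scope ring_scope.

Section RV.
Variable R : comNzRingType.
Implicit Types p q : {poly R}.

Definition rv (n : nat) p : {poly R} := \poly_(i < n.+1) p`_(n - i).

Lemma coef_rv n p i : (rv n p)`_i = if (i <= n)%N then p`_(n - i) else 0.
Proof. by rewrite coef_poly ltnS. Qed.

Lemma rvD n p q : rv n (p + q) = rv n p + rv n q.
Proof. by apply/polyP => i; rewrite coefD !coef_rv coefD; case: ifP; rewrite ?addr0. Qed.

Lemma rvZ n c p : rv n (c *: p) = c *: rv n p.
Proof. by apply/polyP => i; rewrite coefZ !coef_rv coefZ; case: ifP; rewrite ?mulr0. Qed.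

Lemma rv0 n : rv n 0 = 0.
Proof. by apply/polyP => i; rewrite coef_rv !coef0 if_same. Qed.

Lemma rv_sum n I (r : seq I) (P : pred I) (F : I -> {poly R}) :
  rv n (\sum_(i <- r | P i) F i) = \sum_(i <- r | P i) rv n (F i).
Proof.
elim/big_rec2: _ => [|i x y _ <-]; first by rewrite rv0.
by rewrite rvD.
Qed.

Lemma rv_Xn n e : (e <= n)%N -> rv n 'X^e = 'X^(n - e).
Proof.
move=> he; apply/polyP => i; rewrite coef_rv !coefXn.
case: leqP => hi.
  have -> : (n - i == e)%N = (i == n - e)%N by apply/idP/idP => /eqP H; apply/eqP; lia.
  by [].
have -> : (i == n - e)%N = false by apply/negbTE/eqP; lia.
by [].
Qed.

Lemma polyW n p : (size p <= n)%N -> p = \sum_(i < n) p`_i *: 'X^i.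
Proof.
move=> hs; rewrite -poly_def; apply/polyP => j; rewrite coef_poly.
by case: ltnP => // h; rewrite nth_default // (leq_trans hs h).
Qed.

Lemma rvW n p : (size p <= n.+1)%N -> rv n p = \sum_(i < n.+1) p`_i *: 'X^(n - i).
Proof.
move=> hs; rewrite {1}(polyW _ _ hs) rv_sum; apply: eq_bigr => i _.
by rewrite rvZ rv_Xn // -ltnS.
Qed.

Lemma rvM n1 n2 p q : (size p <= n1.+1)%N -> (size q <= n2.+1)%N ->
  rv (n1 + n2) (p * q) = rv n1 p * rv n2 q.
Proof.
move=> hp hq.
rewrite (rvW _ _ hp) (rvW _ _ hq) {1}(polyW _ _ hp) {1}(polyW _ _ hq).
rewrite big_distrl rv_sum /= big_distrl /=; apply: eq_bigr => i _.
rewrite big_distrr rv_sum /= big_distrr /=; apply: eq_bigr => j _.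
rewrite -scalerAl -scalerAr -scalerAl -scalerAr !rvZ -exprD rv_Xn; last first.
  by have := ltn_ord i; have := ltn_ord j; lia.
rewrite -exprD; congr (_ *: (_ *: 'X^_)).
by have := ltn_ord i; have := ltn_ord j; lia.
Qed.

Lemma rv_shift n e p : (size p <= n.+1)%N -> rv (n + e) p = 'X^e * rv n p.
Proof.
move=> hp; have h1 : (size (1%R : {poly R}) <= e.+1)%N by rewrite size_poly1.
rewrite -[p in LHS]mulr1 (rvM _ _ _ _ hp h1) mulrC; congr (_ * _).
by rewrite -(expr0 'X) rv_Xn // subn0.
Qed.

Lemma rv_exp s k p : (size p <= s.+1)%N -> rv (s * k) (p ^+ k) = (rv s p) ^+ k.
Proof.
move=> hp; elim: k => [|k IH].
  by rewrite muln0 !expr0 -(expr0 'X) rv_Xn.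
have hk : (size (p ^+ k) <= (s * k).+1)%N.
  apply: (leq_trans (size_poly_exp_leq _ _)); rewrite ltnS leq_mul2r.
  by apply/orP; right; move: hp; clear; lia.
by rewrite exprSr mulnS addnC (rvM _ _ _ _ hk hp) IH exprSr.
Qed.

End RV.
Arguments rv {R} n p.

Section Pow.
Variable R : comNzRingType.

Lemma pow_low (r : {poly R}) k : r`_0 = 1 -> r`_1 = 0 -> r`_3 = 0 -> r`_5 = 0 ->
  (r ^+ k)`_0 = 1 /\ (r ^+ k)`_1 = 0 /\ (r ^+ k)`_2 = k%:R * r`_2 /\ (r ^+ k)`_3 = 0 /\
      (r ^+ k)`_4 = k%:R * r`_4 + ('C(k,2))%:R * r`_2 ^+ 2 /\ (r ^+ k)`_5 = 0 /\
      (r ^+ k)`_6 = k%:R * r`_6 + ('C(k,2) * 2)%:R * (r`_2 * r`_4)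
                    + ('C(k,3))%:R * r`_2 ^+ 3.
Proof.
move=> h0 h1 h3 h5; elim: k => [|k [i0 [i1 [i2 [i3 [i4 [i5 i6]]]]]]].
  by rewrite expr0 !coefC /= !mul0r !addr0.
rewrite exprSr !coefM !big_ord_recr !big_ord0 /= ?subSS ?subn0 ?subnn.
rewrite i0 i1 i2 i3 i4 i5 i6 h0 h1 h3 h5 !binS ?bin1 ?bin0.
by rewrite !natrD !natrM -natr1; split; [ring|split; [ring|split; [ring|split; [ring|split; [ring|split; ring]]]]].
Qed.

End Pow.

Lemma taylor_coef (R : comNzRingType) (p : {poly R}) c i :
  (p \Po ('X + c%:P))`_i = (p^`N(i)).[c].
Proof.
have H := @nderiv_taylor _ (map_poly polyC p) c%:P 'X (mulrC _ _).
rewrite /comp_poly addrC H size_map_polyC coef_sum.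
under eq_bigr => j _ do rewrite nderivn_map horner_map /= coefCM coefXn.
have [hi|hi] := ltnP i (size p).
  rewrite (bigD1 (Ordinal hi)) //= eqxx mulr1 big1 ?addr0 // => j /eqP hj.
  have -> : (i == j)%N = false by apply/negbTE/eqP => e; apply: hj; apply: val_inj.
  by rewrite mulr0.
rewrite big1; last first.
  move=> j _; have -> : (i == j)%N = false by apply/negbTE/eqP => e; move: (ltn_ord j); lia.
  by rewrite mulr0.
by rewrite nderivn_poly0 // horner0.
Qed.

Section Char2.
Variable R : comNzRingType.
Hypothesis two0 : (2%:R : R) = 0.

Lemma natr_odd n : (n%:R : R) = (odd n)%:R.
Proof.
by rewrite {1}(esym (odd_double_half n)) natrD -mul2n natrM two0 mul0r addr0.
Qed.

Lemma addxx (x : R) : x + x = 0.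
Proof. by rewrite -mulr2n -mulr_natr two0 mulr0. Qed.

Lemma oppE (x : R) : - x = x.
Proof. by apply/eqP; rewrite eq_sym -subr_eq0 opprK addxx. Qed.

Lemma sqrD (x y : R) : (x + y) ^+ 2 = x ^+ 2 + y ^+ 2.
Proof. by rewrite sqrrD -mulr_natr two0 mulr0 addr0. Qed.

Lemma subE (x y : R) : x - y = x + y.
Proof. by rewrite oppE. Qed.

End Char2.

Lemma two0P (F : fieldType) : (2%:R : F) = 0 -> (2%:R : {poly F}) = 0.
Proof. by move=> h; rewrite -polyC_natr h. Qed.

Section Field2.
Variable F : fieldType.
Hypothesis two0 : (2%:R : F) = 0.

Lemma even_decomp (f : {poly F}) : f^`() = 0 ->
  f = (\poly_(i < size f) f`_(2 * i)) \Po 'X^2.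
Proof.
move=> hd; apply/polyP => j; rewrite coef_comp_poly_Xn // coef_poly.
case: (boolP (2 %| j)%N) => [/dvdnP [q ->]|hj].
  rewrite mulnK // mulnC; case: ltnP => // hq.
  by rewrite nth_default // (leq_trans hq) // leq_pmull.
rewrite dvdn2 negbK in hj.
case: j hj => // j hj.
have := congr1 (fun p : {poly F} => p`_j) hd; rewrite coef_deriv coef0 -mulr_natr.
by rewrite natr_odd // hj mulr1.
Qed.

Lemma gshift_coef (f h : {poly F}) a : f = h \Po 'X^2 -> forall k,
  (gshift f a)`_k = if odd k then (h^`N(k.+1./2)).[a ^+ 2] else 0.
Proof.
move=> hf k.
set P := f \Po ('X + a%:P) + (f.[a])%:P.
have hP0 : root P 0.
  by rewrite rootE hornerD horner_comp hornerD hornerX hornerC add0r hornerC addxx.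
have hdiv : 'X %| P by rewrite -(subr0 'X) -polyC0 dvdp_XsubCl.
have HG : gshift f a * 'X = P by rewrite /gshift divpK.
have -> : (gshift f a)`_k = P`_k.+1 by rewrite -HG coefMX.
rewrite /P coefD coefC /= addr0 hf -comp_polyA comp_Xn_poly.
rewrite sqrD; last exact: two0P.
have -> : 'X ^+ 2 + a%:P ^+ 2 = ('X + (a ^+ 2)%:P) \Po 'X^2.
  by rewrite comp_polyD comp_polyX comp_polyC polyC_exp.
rewrite comp_polyA coef_comp_poly_Xn // dvdn2 /= negbK taylor_coef divn2.
by [].
Qed.

End Field2.

Section Dick.
Variable F : fieldType.

Lemma half_le s i : (i < s./2.+1)%N -> (2 * i <= s)%N.
Proof.
move=> hi; have H := odd_double_half s; rewrite -muln2 in H.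
have : ((odd s : nat) <= 1)%N by case: odd.
lia.
Qed.

Lemma rv_dickson s (b : F) : rv s (dickson s b) =
  \sum_(i < s./2.+1) ((cdk s i)%:R * (- b) ^+ i) *: 'X^(2 * i).
Proof.
rewrite /dickson rv_sum; apply: eq_bigr => i _.
rewrite rvZ rv_Xn ?leq_subr //; congr (_ *: 'X^_).
have := half_le _ _ (ltn_ord i); lia.
Qed.

Lemma size_dickson s (b : F) : (size (dickson s b) <= s.+1)%N.
Proof.
rewrite /dickson (leq_trans (size_sum _ _ _)) //; apply/bigmax_leqP => i _.
rewrite (leq_trans (size_scale_leq _ _)) // size_polyXn ltnS leq_subr //.
Qed.

Lemma coef_rvd_even s (b : F) j :
  (rv s (dickson s b))`_(2 * j) = (cdk s j)%:R * (- b) ^+ j.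
Proof.
rewrite rv_dickson coef_sumMXn.
under eq_bigl => i do rewrite eqn_mul2l /=.
rewrite (big_ord1_eq _ (fun i : nat => (cdk s i)%:R * (- b) ^+ i)).
case: ltnP => // hj; rewrite cdk_big ?mul0r //.
Qed.

Lemma coef_rvd_odd s (b : F) j : (rv s (dickson s b))`_(2 * j).+1 = 0.
Proof.
rewrite rv_dickson coef_sumMXn big_pred0 // => i /=.
apply/negbTE/eqP => e; have := congr1 odd e; rewrite oddS !oddM /=.
by [].
Qed.

End Dick.

Section Top.
Variable R : comNzRingType.

Lemma size_exp_le (D : {poly R}) s i : (size D <= s.+1)%N -> (size (D ^+ i) <= (s * i).+1)%N.
Proof.
move=> hD; apply: (leq_trans (size_poly_exp_leq _ _)); rewrite ltnS leq_mul2r.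
by apply/orP; right; move: hD; clear; lia.
Qed.

Lemma comp_top (v D : {poly R}) s d k : (size D <= s.+1)%N -> size v = d.+1 ->
  (5 <= s)%N -> odd s -> (forall i, ((rv s D) ^+ i)`_1 = 0) -> (k <= 6)%N -> ~~ odd k ->
  (rv (s * d) (v \Po D))`_k = v`_d * ((rv s D) ^+ d)`_k.
Proof.
move=> hD hv hs os h1 hk ok.
rewrite comp_polyE hv rv_sum coef_sum big_ord_recr /= rvZ coefZ rv_exp //.
rewrite big1 ?add0r // => i _.
have hi := ltn_ord i.
have -> : (s * d = s * i + s * (d - i))%N by rewrite -mulnDr subnKC // ltnW.
rewrite rvZ coefZ rv_shift ?size_exp_le // rv_exp // coefXnM.
case: ltnP => hlt; first by rewrite mulr0.
have hdi : (d - i = 1)%N.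
  have : (1 <= d - i)%N by rewrite subn_gt0.
  case: (d - i)%N hlt => [|[|m]] //= hlt _.
  exfalso; have : (s * 2 <= s * m.+2)%N by rewrite leq_mul2l ltnS orbT.
  lia.
rewrite hdi muln1 in hlt *.
have hs5 : s = 5%N.
  have : (s = 5 \/ s = 6)%N by lia.
  by case=> // e; rewrite e in os.
have hk6 : k = 6%N.
  have : (k = 5 \/ k = 6)%N by lia.
  by case=> // e; rewrite e in ok.
by rewrite hk6 (_ : (6 - s = 1)%N) ?h1 ?mulr0 //; lia.
Qed.

End Top.

Section Main.
Variable F : fieldType.
Hypothesis two0 : (2%:R : F) = 0.

Lemma nz_size (p : {poly F}) i : p`_i != 0 -> (i < size p)%N.
Proof. by move=> h; rewrite ltnNge; apply/negP => /leq_sizeP H; rewrite H ?eqxx in h. Qed.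

Lemma nder_top (h : {poly F}) N x : size h = N.+1 -> (h^`N(N)).[x] = h`_N.
Proof.
move=> hh; rewrite (horner_coef_wide (n := 1)).
  by rewrite big_ord1 coef_nderivn addn0 binn mulr1n expr0 mulr1.
rewrite /nderivn (leq_trans (size_poly _ _)) // hh; lia.
Qed.

Lemma delta_info (f h : {poly F}) a N : f = h \Po 'X^2 -> size h = N.+1 -> (3 <= N)%N ->
  in_Delta f a ->
  exists b : F, b != 0 /\ (h^`N((N-1)%N)).[a^+2] = h`_N * b /\
    (h^`N((N-2)%N)).[a^+2] = h`_N * (odd N)%:R * b^+2 /\
    ((4 <= N)%N -> (N %% 4 = 3)%N -> (h^`N((N-3)%N)).[a^+2] = 0).
Proof.
move=> hf hh hN [v [s [b [hs [hb HG]]]]].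
exists b; split => //.
set G := gshift f a in HG.
have hG := gshift_coef _ two0 _ _ a hf.
have hN0 : h`_N != 0.
  have : h != 0 by rewrite -size_poly_eq0 hh.
  by rewrite -lead_coef_eq0 lead_coefE hh.
have hGt : G`_(2 * N - 1) = h`_N.
  have o : odd (2 * N - 1)%N.
    by rewrite (_ : (2 * N - 1 = (N-1).*2.+1)%N) /= ?odd_double //; lia.
  rewrite hG o.
  by rewrite (_ : ((2 * N - 1).+1./2 = N)%N) ?(nder_top _ _ _ hh) //; lia.
have szG : size G = (2 * N)%N.
  apply/eqP; rewrite eqn_leq; apply/andP; split.
    apply/leq_sizeP => j hj; rewrite hG; case: ifP => // oj.
    rewrite nderivn_poly0 ?horner0 // hh.
    have := odd_double_half j; rewrite oj -muln2; lia.
  have := nz_size G (2 * N - 1)%N; rewrite hGt => /(_ hN0); move: (size G) => n; lia.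
have hv0 : v != 0.
  apply/eqP => v0; move: szG; rewrite HG v0 comp_poly0 size_poly0; lia.
set d := (size v).-1.
have hv : size v = d.+1 by rewrite /d -polySpred.
set D := dickson s b in HG.
have hDs : (size D <= s.+1)%N := size_dickson F s b.
set r := rv s D.
have r0 : r`_0 = 1.
  have := coef_rvd_even F s b 0; rewrite muln0 expr0 mulr1 cdk0 //; lia.
have r1 : r`_1 = 0 := coef_rvd_odd F s b 0.
have r3 : r`_3 = 0 := coef_rvd_odd F s b 1.
have r5 : r`_5 = 0 := coef_rvd_odd F s b 2.
have r2 : r`_2 = (cdk s 1)%:R * (- b) ^+ 1 := coef_rvd_even F s b 1.
have r4 : r`_4 = (cdk s 2)%:R * (- b) ^+ 2 := coef_rvd_even F s b 2.
have r6 : r`_6 = (cdk s 3)%:R * (- b) ^+ 3 := coef_rvd_even F s b 3.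
have hDs' : size D = s.+1.
  apply/eqP; rewrite eqn_leq hDs /=; apply: nz_size.
  by move: r0; rewrite /r coef_rv /= subn0 => ->; apply: oner_neq0.
have hm : (2 * N - 1 = s * d)%N.
  have := size_comp_poly v D; rewrite -HG szG hDs' /= hv /=; lia.
have oN : odd (2 * N - 1)%N.
  by rewrite (_ : (2 * N - 1 = (N-1).*2.+1)%N) /= ?odd_double //; lia.
have /andP [os od] : odd s && odd d by rewrite -oddM -hm.
have hr1 : forall i, (r ^+ i)`_1 = 0.
  by move=> i; have [_ [-> _]] := pow_low F r i r0 r1 r3 r5.
have key : forall j, (j <= 3)%N -> (2 * j <= 2 * N - 1)%N ->
    (h^`N((N - j)%N)).[a^+2] = v`_d * (r ^+ d)`_(2 * j).
  move=> j hj hj2.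
  have := comp_top F v D s d (2 * j) hDs hv hs os hr1.
  rewrite -HG coef_rv -hm hj2 => <-; [|lia|by rewrite oddM].
  rewrite hG (_ : odd (2 * N - 1 - 2 * j)); last first.
    by rewrite oddB ?oN ?oddM //; lia.
  by rewrite (_ : ((2 * N - 1 - 2 * j).+1./2 = N - j)%N) //; lia.
have [p0 [p1 [p2 [p3 [p4 [p5 p6]]]]]] := pow_low F r d r0 r1 r3 r5.
have vd : v`_d = h`_N.
  have := key 0%N isT; rewrite muln0 subn0 p0 mulr1 => <-; last by lia.
  by rewrite (nder_top _ _ _ hh).
have ps : (s%:R : F) = 1 by rewrite natr_odd // os.
have pd : (d%:R : F) = 1 by rewrite natr_odd // od.
have oppb : - b = b by rewrite oppE.
split.
  rewrite key //; last by lia.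
  by rewrite vd p2 r2 pd cdk1 ?ps ?oppb ?expr1 ?mul1r //; lia.
have [t ts] : exists t, s = (t + 5)%N by exists (s - 5)%N; lia.
have ot : odd t = false.
  by move: os; rewrite ts oddD /=; case: (odd t).
have E : ((t + 5) * d + 1 = 2 * N)%N by rewrite -ts -hm; lia.
have [P1 P2] := parity_main t d N ot od E.
have c2 : cdk s 2 = ('C(t + 3, 2) + (t + 2))%N by rewrite ts cdk2.
have c3 : cdk s 3 = ('C(t + 2, 3) + 'C(t + 1, 2))%N by rewrite ts cdk3.
have r2' : r`_2 = b by rewrite r2 cdk1 ?ps ?oppb ?expr1 ?mul1r //; lia.
split.
  rewrite key //; last by lia.
  rewrite vd p4 r4 r2' c2 oppb pd -P1 -(natr_odd _ two0) !natrD !natrM pd.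
  by ring.
move=> h4 h3; rewrite key //; last by lia.
rewrite vd p6 r6 r4 r2' c3 oppb natrM two0 !mulr0 mul0r addr0.
pose e3 := (d * ('C(t + 2, 3) + 'C(t + 1, 2)) + 'C(d, 3))%N.
have e : (e3%:R : F) = 0 by rewrite natr_odd // P2.
transitivity (h`_N * (e3%:R * b ^+ 3)).
  by rewrite /e3 !natrD !natrM pd; ring.
by rewrite e mul0r mulr0.
Qed.

Lemma c1_formula (h : {poly F}) N x : size h = N.+1 -> (1 <= N)%N ->
  (h^`N((N-1)%N)).[x] = h`_(N-1) + N%:R * h`_N * x.
Proof.
case: N => // M hh _; rewrite subn1 /=.
rewrite (horner_coef_wide (n := 2)); last first.
  by rewrite /nderivn (leq_trans (size_poly _ _)) // hh; lia.
rewrite !big_ord_recr big_ord0 /= !coef_nderivn addn0 addn1 binn binSn.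
by rewrite add0r expr0 expr1 mulr1n mulr1 mulr_natl.
Qed.

Lemma c2_formula (h : {poly F}) N x : size h = N.+1 -> (2 <= N)%N ->
  (h^`N((N-2)%N)).[x] = h`_(N-2) + (N-1)%:R * h`_(N-1) * x + 'C(N,2)%:R * h`_N * x ^+ 2.
Proof.
case: N => [|[|M]] // hh _; rewrite !subSS !subn0 /=.
rewrite (horner_coef_wide (n := 3)); last first.
  by rewrite /nderivn (leq_trans (size_poly _ _)) // hh; lia.
have e : 'C(M.+2, M) = 'C(M.+2, 2) by have := @bin_sub M.+2 2 isT; rewrite !subSS subn0.
rewrite !big_ord_recr big_ord0 /= !coef_nderivn addn0 addn1 addn2 binn binSn e.
by rewrite add0r expr0 expr1 mulr1n mulr1 !mulr_natl.
Qed.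

End Main.

Section Roots.
Variable F : finFieldType.

Lemma few_roots (p : {poly F}) (S : {set F}) : p != 0 -> (size p <= 4)%N ->
  (forall x, x \in S -> p.[x] = 0) -> (#|S| <= 3)%N.
Proof.
move=> hp hs H.
have hall : all (root p) (enum S).
  by apply/allP => x; rewrite mem_enum => /H hx; rewrite /root hx.
have := max_poly_roots hp hall (enum_uniq (mem S)).
rewrite -cardE => h; exact: leq_trans h hs.
Qed.

End Roots.

Section Final.
Variable F : fieldType.
Hypothesis two0 : (2%:R : F) = 0.

Lemma final6 (f h : {poly F}) u : f = h \Po 'X^2 -> size h = 4%N ->
  h`_3 * h`_1 = h`_2 ^+ 2 -> u ^+ 2 = h`_2 / h`_3 ->
  exists rho eta : {poly F},
    size rho = 2%N /\ size eta = 2%N /\ f = rho \Po ('X^6 \Po eta).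
Proof.
move=> hf hh e12 hu.
have h3 : h`_3 != 0.
  have : h != 0 by rewrite -size_poly_eq0 hh.
  by rewrite -lead_coef_eq0 lead_coefE hh.
set t := h`_2 / h`_3 in hu.
have e2 : h`_2 = h`_3 * t by rewrite /t mulrC divfK.
have e1 : h`_1 = h`_3 * t ^+ 2.
  apply: (mulfI h3); rewrite e12 e2; ring.
clearbody t.
have K : forall q : {poly F}, q *+ 2 = 0.
  by move=> q; rewrite -mulr_natr (two0P _ two0) mulr0.
exists ((h`_3)%:P * 'X + (h`_0 - h`_3 * t ^+ 3)%:P), ('X + u%:P).
split.
  by rewrite size_MXaddC polyC_eq0 (negbTE h3) /= size_polyC h3.
split; first by rewrite size_XaddC.
rewrite comp_Xn_poly comp_poly_MXaddC comp_polyC.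
rewrite (_ : 6%N = (2 * 3)%N) // exprM sqrD; last exact: two0P _ two0.
rewrite -polyC_exp hu -/t.
rewrite hf {1}(polyW _ 4 h); last by rewrite hh.
rewrite !big_ord_recr big_ord0 /= !comp_polyD !comp_polyZ comp_poly0 !comp_Xn_poly.
rewrite -!mul_polyC e1 e2 ?polyCM ?polyC_exp ?polyCB ?polyCM ?polyC_exp.
set Y := 'X ^+ 2; set T := t%:P; set H3 := (h`_3)%:P; set H0 := (h`_0)%:P.
apply/eqP; rewrite -subr_eq0; apply/eqP.
transitivity (- ((H3 * T * Y ^+ 2 + H3 * T ^+ 2 * Y) *+ 2)); last by rewrite K oppr0.
rewrite /Y; ring.
Qed.

End Final.

Lemma coef_nz (F : fieldType) (p : {poly F}) i : p`_i != 0 -> p != 0.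
Proof. by apply: contraNneq => ->; rewrite coef0. Qed.

Theorem lemma3p3 (F : finFieldType) (k : nat) (f : {poly F}) :
  (1 <= k)%N -> #|F| = (2 ^ k)%N ->
  f^`() = 0 -> (7 <= size f)%N ->
  (3 < #|Delta f|)%N ->
  exists rho eta : {poly F},
    size rho = 2%N /\ size eta = 2%N /\ f = rho \Po ('X^6 \Po eta).
Proof.
move=> hk hF hd hsz hD.
have two0 : (2%:R : F) = 0.
  by apply: pcharf0; apply: (card_finPcharP hF).
set h := \poly_(i < size f) f`_(2 * i).
have hf : f = h \Po 'X^2 := even_decomp F two0 f hd.
have hh0 : h != 0.
  apply/eqP => h0; move: hsz; rewrite hf h0 comp_poly0 size_poly0.
  by [].
set N := (size h).-1.
have hh : size h = N.+1 by rewrite /N -polySpred.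
have hN : (3 <= N)%N.
  have := size_comp_poly h 'X^2; rewrite -hf size_polyXn hh /=.
  move: hsz; move: (size f) => sf; lia.
have hN0 : h`_N != 0.
  by rewrite -lead_coef_eq0 lead_coefE hh in hh0.
pose S := [set x ^+ 2 | x in Delta f].
have cS : #|S| = #|Delta f|.
  apply: card_imset => x y /= e.
  have : (x - y) ^+ 2 == 0.
    by rewrite (subE _ two0) (sqrD _ two0) -(subE _ two0) e subrr.
  by rewrite expf_eq0 /= subr_eq0 => /eqP.
have info : forall A, A \in S -> exists b : F, b != 0 /\ (h^`N((N-1)%N)).[A] = h`_N * b /\
    (h^`N((N-2)%N)).[A] = h`_N * (odd N)%:R * b^+2 /\
    ((4 <= N)%N -> (N %% 4 = 3)%N -> (h^`N((N-3)%N)).[A] = 0).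
  move=> A /imsetP [a ha ->]; apply: (delta_info F two0 f h a N hf hh hN).
  by move: ha; rewrite inE => /boolp.asboolP.
have [A0 hA0] : exists A0, A0 \in S.
  apply/set0Pn; rewrite -card_gt0 cS; lia.
have contra : forall p : {poly F}, p != 0 -> (size p <= 4)%N ->
    (forall x, x \in S -> p.[x] = 0) -> False.
  by move=> p hp hs H; have := few_roots F p S hp hs H; rewrite cS; lia.
have K2 : forall x : F, x *+ 2 = 0 by move=> x; rewrite -mulr_natr two0 mulr0.
have hN1 : (1 <= N)%N by lia.
have hN2 : (2 <= N)%N by lia.
case oN : (odd N).
  have [N1 N3] := Nfacts N.
  have pN : (N%:R : F) = 1 by rewrite (natr_odd _ two0) oN.
  have pN1 : ((N - 1)%N%:R : F) = 0.
    by rewrite (natr_odd _ two0) oddB ?oN //; lia.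
  pose p := ((h`_N * h`_(N-2) - h`_(N-1) ^+ 2)%:P +
             (h`_N ^+ 2 * ('C(N,2)%:R - 1)) *: 'X^2).
  have pA : forall A, A \in S -> p.[A] = 0.
    move=> A /info [b [hb [E1 [E2 _]]]].
    rewrite (c1_formula F h N A hh hN1) pN mul1r in E1.
    rewrite (c2_formula F h N A hh hN2) pN1 !mul0r addr0 oN mulr1 in E2.
    have e1 : h`_(N-1) = h`_N * b - h`_N * A by rewrite -E1 addrK.
    have e2 : h`_(N-2) = h`_N * b ^+ 2 - 'C(N,2)%:R * h`_N * A ^+ 2 by rewrite -E2 addrK.
    rewrite /p hornerD hornerC hornerZ hornerXn e1 e2.
    transitivity ((h`_N ^+ 2 * A * (b - A)) *+ 2); last by rewrite K2.
    by ring.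
  have : (N %% 2 = 1)%N by rewrite modn2 oN.
  move=> m2; have [N1' | N3'] : (N %% 4 = 1 \/ N %% 4 = 3)%N by lia.
    exfalso; apply: (contra p) => //.
      apply: (coef_nz _ p 2); rewrite /p coefD coefC coefZ coefXn /= add0r mulr1.
      rewrite (natr_odd _ two0) N1 // sub0r mulrN oppr_eq0 mulr1 expf_neq0 //.
    apply/leq_sizeP => j hj; rewrite /p coefD coefC coefZ coefXn.
    have -> : (j == 0)%N = false by apply/negbTE; lia.
    have -> : (j == 2)%N = false by apply/negbTE; lia.
    by rewrite mulr0 addr0.
  case: (N =P 3)%N => [N3e | Nn3].
    have pc : p = (h`_N * h`_(N-2) - h`_(N-1) ^+ 2)%:P.
      rewrite /p N3e (natr_odd _ two0) /= subrr mulr0 scale0r addr0.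
      by [].
    have := pA A0 hA0; rewrite pc hornerC => /eqP; rewrite subr_eq0 => /eqP e.
    rewrite N3e /= in e hh.
    pose u := (h`_2 / h`_3) ^+ (2 ^ (k - 1)).
    apply: (final6 F two0 f h u hf hh e).
    rewrite /u -exprM -expnSr subn1 prednK // -hF.
    by rewrite expf_card.
  exfalso; apply: (contra (h^`N((N-3)%N))).
  - apply: (coef_nz _ _ 3); rewrite coef_nderivn subnK; last by lia.
    have -> : 'C(N, N - 3) = 'C(N, 3) by rewrite bin_sub //; lia.
    rewrite -mulr_natr (natr_odd _ two0).
    have [_ ->] := N3 N3'.
    by rewrite mulr1.
  - by rewrite /nderivn (leq_trans (size_poly _ _)) // hh; lia.
  - move=> x /info [b [_ [_ [_ H]]]]; apply: H => //; lia.
have pN : (N%:R : F) = 0 by rewrite (natr_odd _ two0) oN.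
have [b0 [hb0 [E1 _]]] := info A0 hA0.
rewrite (c1_formula F h N A0 hh hN1) pN !mul0r addr0 in E1.
have hNm1 : h`_(N-1) != 0 by rewrite E1 mulf_neq0.
exfalso; apply: (contra (h^`N((N-2)%N))).
- apply: (coef_nz _ _ 1); rewrite coef_nderivn.
  have -> : (N - 2 + 1 = N - 1)%N by lia.
  have -> : 'C(N - 1, N - 2) = (N - 1)%N.
    rewrite (_ : (N - 2 = (N - 1) - 1)%N); last by lia.
    by rewrite bin_sub ?bin1 //; lia.
  rewrite -mulr_natr (natr_odd _ two0) oddB ?oN; last by lia.
  by rewrite mulr1.
- by rewrite /nderivn (leq_trans (size_poly _ _)) // hh; lia.
- move=> x /info [b [_ [_ [H _]]]]; by rewrite H oN mulr0 mul0r.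
Qed.
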